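(* Let $M$ be a loopless matroid of rank $r$ on ground set $S$, and let $S=S_1\cup\dots\cup S_r$ be a partition of $S$ into $r$ color classes. The following are equivalent: (i) $S_i$ is a cut of the restriction $M|(S_1\cup\dots\cup S_i)$ for $i=1,\dots,r$; (ii) the coloring is rainbow circuit-free and $r_M(S_1\cup\dots\cup S_i)=i$ for $i=1,\dots,r$; (iii) each $S_i$ is non-empty and $S_1\cup\dots\cup S_i$ is closed in $M$ for $i=1,\dots,r$.
   Context: A cut of a matroid is an inclusionwise minimal subset of the ground set intersecting every basis. A coloring is rainbow circuit-free if no circuit of $M$ has all its elements of pairwise different colors. A set $X\subseteq S$ is closed (a flat) if $r_M(X+e)>r_M(X)$ for every $e\in S-X$. *)

(* Defs.v *)
From mathcomp Require Import all_boot.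
Set Implicit Arguments. Unset Strict Implicit. Unset Printing Implicit Defensive.

Record matroid (T : finType) := Matroid {
  indep : {set T} -> bool;
  indep0 : indep set0;
  indep_sub : forall A B : {set T}, B \subset A -> indep A -> indep B;
  indep_aug : forall A B : {set T}, indep A -> indep B -> #|A| < #|B| ->
     exists2 x, x \in B :\: A & indep (x |: A)
}.

Section Defs.
Variables (T : finType) (M : matroid T).

Definition rank (X : {set T}) : nat :=
  \max_(I : {set T} | indep M I && (I \subset X)) #|I|.

Definition loopless : Prop := forall x : T, indep M [set x].

Definition basis_of (X B : {set T}) : bool :=
  [&& indep M B, B \subset X & #|B| == rank X].

(* C is a cut of M|X: inclusionwise minimal subset of X meeting every basis of M|X *)
Definition cut_of (X C : {set T}) : bool :=
  minset (fun D : {set T} => (D \subset X) &&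
            [forall B : {set T}, basis_of X B ==> (D :&: B != set0)]) C.

Definition circuit (C : {set T}) : bool := minset (fun D => ~~ indep M D) C.

Definition is_flat (X : {set T}) : Prop :=
  forall e, e \notin X -> rank X < rank (e |: X).

Definition rainbow_circuit_free (col : T -> nat) : Prop :=
  forall C : {set T}, circuit C -> ~ {in C &, injective col}.

End Defs.

Definition cclass (T : finType) (col : T -> nat) (i : nat) : {set T} :=
  [set x | col x == i].
Definition cprefix (T : finType) (col : T -> nat) (i : nat) : {set T} :=
  [set x | col x <= i].

(* Main.v *)
Require Import Defs.
From mathcomp Require Import all_boot zify.
Set Implicit Arguments. Unset Strict Implicit. Unset Printing Implicit Defensive.

Section Gen.
Variables (T : finType) (M : matroid T).

Lemma rank_ge (I X : {set T}) : indep M I -> I \subset X -> #|I| <= rank M X.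
Proof.
move=> iI sIX; rewrite /rank.
apply: (@leq_bigmax_cond _ (fun J : {set T} => indep M J && (J \subset X)) (fun J => #|J|)).
by rewrite iI sIX.
Qed.

Lemma rank_wit (X : {set T}) :
  exists B, [/\ indep M B, B \subset X & #|B| = rank M X].
Proof.
have h0 : 0 < #|[pred J : {set T} | indep M J && (J \subset X)]|.
  apply/card_gt0P; exists set0; by rewrite inE indep0 sub0set.
have [B] := eq_bigmax_cond (fun J : {set T} => #|J|) h0.
rewrite inE => /andP[iB sB] e; exists B; split => //.
Qed.

Lemma rank_le_card (X : {set T}) : rank M X <= #|X|.
Proof. have [B [_ sB <-]] := rank_wit X; exact: subset_leq_card. Qed.

Lemma rank_mono (X Y : {set T}) : X \subset Y -> rank M X <= rank M Y.
Proof.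
move=> sXY; have [B [iB sB <-]] := rank_wit X; apply: rank_ge => //.
exact: subset_trans sXY.
Qed.

Lemma extend (X I : {set T}) : indep M I -> I \subset X ->
  exists B, [/\ indep M B, I \subset B, B \subset X & #|B| = rank M X].
Proof.
move=> iI sI.
have [n hn] : exists n, rank M X - #|I| <= n by exists (rank M X - #|I|).
elim: n I iI sI hn => [|n IH] I iI sI hn.
  exists I; split => //; have := rank_ge iI sI; lia.
case: (leqP (rank M X) #|I|) => hl.
  exists I; split => //; have := rank_ge iI sI; lia.
have [W [iW sW eW]] := rank_wit X.
have [x /setDP[xW xI] ix] := indep_aug iI iW (ltac:(by rewrite eW)).
have s1 : x |: I \subset X by rewrite subUset sub1set sI (subsetP sW).
have [B [iB sB sBX eB]] := IH (x |: I) ix s1 (ltac:(rewrite cardsU1 xI; lia)).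
exists B; split => //; exact: subset_trans (subsetUr _ _) sB.
Qed.

Lemma mclosure (X B : {set T}) e : indep M B -> B \subset X -> #|B| = rank M X ->
  rank M X < rank M (e |: X) -> indep M (e |: B).
Proof.
move=> iB sB eB lt.
have [J [iJ sJ eJ]] := rank_wit (e |: X).
have [x /setDP[xJ xB] ix] := indep_aug iB iJ (ltac:(by rewrite eJ eB)).
case: (eqVneq x e) => [<- //|ne].
have xX : x \in X by have := subsetP sJ x xJ; rewrite in_setU1 (negbTE ne).
have s1 : x |: B \subset X by rewrite subUset sub1set xX sB.
have := rank_ge ix s1.
rewrite cardsU1 xB; lia.
Qed.

Lemma rank_add1 (X : {set T}) e : rank M (e |: X) <= (rank M X).+1.
Proof.
have [B [iB sB <-]] := rank_wit (e |: X).
have h : B :\ e \subset X.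
  apply/subsetP => x /setD1P[ne xB]; have := subsetP sB x xB.
  by rewrite in_setU1 (negbTE ne).
have := rank_ge (indep_sub (subsetDl B [set e]) iB) h.
rewrite (cardsD1 e B); case: (e \in B) => /=; lia.
Qed.

Lemma closure_mono (X Y : {set T}) e : X \subset Y ->
  rank M Y < rank M (e |: Y) -> rank M X < rank M (e |: X).
Proof.
move=> sXY lt.
have eY : e \notin Y.
  apply/negP => eY; move: lt; by rewrite (setUidPr (_ : [set e] \subset Y)) ?sub1set // ltnn.
have [B [iB sB <-]] := rank_wit X.
have [B' [iB' sBB' sB'Y eB']] := extend iB (subset_trans sB sXY).
have ie := mclosure iB' sB'Y eB' lt.
have ieB : indep M (e |: B) := indep_sub (setUS _ sBB') ie.
have := rank_ge ieB (setUS _ sB).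
have eB : e \notin B by apply: contra eY => /(subsetP sB) /(subsetP sXY).
rewrite cardsU1 eB; lia.
Qed.

Lemma circuit_in (A : {set T}) : ~~ indep M A -> exists C, circuit M C /\ C \subset A.
Proof.
move=> h; have [C hC sC] := minset_exists (P := fun D => ~~ indep M D) h.
by exists C.
Qed.

End Gen.

Section Main.
Variables (T : finType) (M : matroid T) (r : nat) (col : T -> nat).
Hypotheses (hll : loopless M) (hr : rank M [set: T] = r)
  (hcol : forall x, 1 <= col x <= r).
Local Notation P := (cprefix col).
Local Notation S := (cclass col).

Lemma inP x i : (x \in P i) = (col x <= i).
Proof. by rewrite /cprefix inE. Qed.
Lemma inS x i : (x \in S i) = (col x == i).
Proof. by rewrite /cclass inE. Qed.

Lemma P0 : P 0 = set0.
Proof. apply/setP => x; rewrite inP inE; have := hcol x; lia. Qed.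
Lemma Pr : P r = setT.
Proof. apply/setP => x; rewrite inP inE; have := hcol x; lia. Qed.
Lemma rP0 : rank M (P 0) = 0.
Proof. have := rank_le_card M (P 0); rewrite P0 cards0; lia. Qed.

Lemma subP i j : i <= j -> P i \subset P j.
Proof. move=> h; apply/subsetP => x; rewrite !inP; lia. Qed.

Definition K := (forall i, 1 <= i <= r -> rank M (P i) = i) /\
  (forall e, rank M (P (col e).-1) < rank M (e |: P (col e).-1)).

Lemma rPall : (forall i, 1 <= i <= r -> rank M (P i) = i) ->
  forall i, i <= r -> rank M (P i) = i.
Proof. move=> h [|i] hi; [exact: rP0 | apply: h; lia]. Qed.

Lemma inj_add (B : {set T}) x : {in B &, injective col} ->
  (forall y, y \in B -> col y < col x) -> {in x |: B &, injective col}.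
Proof.
move=> ha hb a b; rewrite !in_setU1 => /predU1P[->|aB] /predU1P[->|bB] //.
- move=> e; have := hb b bB; lia.
- move=> e; have := hb a aB; lia.
- exact: ha.
Qed.

Lemma K_rainbow : K -> rainbow_circuit_free M col.
Proof.
move=> [hK1 hK2] C hC inj.
move/minsetP: hC => [dC minC].
have [e0 e0C] : exists e0, e0 \in C.
  apply/set0Pn; apply/negP => /eqP C0; by rewrite C0 indep0 in dC.
case: (@arg_maxnP _ e0 (mem C) col e0C) => e eC emax.
have sub : C :\ e \subset P (col e).-1.
  apply/subsetP => x /setD1P[ne xC]; rewrite inP.
  have := emax x xC; have : col x != col e.
    by apply/negP => /eqP h; move: ne; rewrite (inj x e xC eC h) eqxx.
  lia.
have iCe : indep M (C :\ e).
  apply/negPn/negP => d; have := minC _ d (subsetDl _ _) => h.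
  by move: eC; rewrite -h !inE eqxx.
have [B [iB sCB sB eB]] := extend iCe sub.
have ie := mclosure iB sB eB (hK2 e).
have sC : C \subset e |: B.
  apply/subsetP => x xC; rewrite in_setU1; case: eqP => //= ne.
  by apply: (subsetP sCB); rewrite !inE xC andbT; apply/eqP.
by move: dC; rewrite (indep_sub sC ie).
Qed.

Lemma K_i : K -> forall i, 1 <= i <= r -> cut_of M (P i) (S i).
Proof.
move=> hK i hi; have rP := rPall hK.1; have [_ hK2] := hK.
apply/minsetP; split.
- apply/andP; split.
    by apply/subsetP => x; rewrite inS inP => /eqP ->.
  apply/forallP => B; apply/implyP => /and3P[iB sB /eqP eB].
  apply/negP => /eqP hE.
  have sB' : B \subset P i.-1.
    apply/subsetP => x xB; have : x \in S i :&: B = (x \in set0) by rewrite hE.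
    rewrite in_setI in_set0 xB andbT inS => /negbT h.
    have := subsetP sB x xB; rewrite !inP; lia.
  have := rank_ge iB sB'; rewrite eB rP ?rP; lia.
- move=> D /andP[sD /forallP hD] sDS.
  apply/eqP; rewrite eqEsubset sDS /=; apply/subsetP => e eS.
  apply/negPn/negP => eD.
  have [B0 [iB0 sB0 eB0]] := rank_wit M (P i.-1).
  have ce : col e = i by move: eS; rewrite inS => /eqP.
  have := hK2 e; rewrite ce => lt.
  have ie := mclosure iB0 sB0 eB0 lt.
  have nB0 : e \notin B0 by apply/negP => /(subsetP sB0); rewrite inP ce; lia.
  have bas : basis_of M (P i) (e |: B0).
    rewrite /basis_of ie subUset sub1set inP ce leqnn /=.
    rewrite (subset_trans sB0 (subP (leq_pred i))) /=.
    by rewrite cardsU1 nB0 eB0 rP ?rP; [apply/eqP; lia | lia | lia].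
  have /set0Pn [x] := implyP (hD (e |: B0)) bas.
  rewrite !inE => /andP[xD /predU1P[xe|xB]].
    by move: eD; rewrite -xe xD.
  have := subsetP sDS x xD; have := subsetP sB0 x xB; rewrite inS inP; lia.
Qed.


Lemma K_iii : K -> forall i, 1 <= i <= r -> S i != set0 /\ is_flat M (P i).
Proof.
move=> hK i hi; have rP := rPall hK.1; have [_ hK2] := hK; split.
- apply/negP => /eqP S0.
  have e : P i = P i.-1.
    apply/setP => x; have : x \in S i = (x \in set0) by rewrite S0.
    rewrite in_set0 inS !inP => /negbT; lia.
  have := rP i; have := rP i.-1; rewrite e; lia.
- move=> e; rewrite inP => ne.
  apply: (closure_mono (Y := P (col e).-1)) (hK2 e).
  apply: subP; lia.
Qed.

Lemma iii_K : (forall i, 1 <= i <= r -> S i != set0 /\ is_flat M (P i)) -> K.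
Proof.
move=> h.
have key : forall e, rank M (P (col e).-1) < rank M (e |: P (col e).-1).
  move=> e; case ce: (col e) => [|[|j]].
  - have := hcol e; lia.
  - rewrite /= rP0 P0 setU0; have := rank_ge (hll e) (subxx _); by rewrite cards1.
  - have := hcol e => hc.
    have hj : 1 <= j.+1 <= r by lia.
    apply: (proj2 (h j.+1 hj)).
    rewrite inP; lia.
have step : forall i, 1 <= i <= r -> rank M (P i.-1) < rank M (P i).
  move=> i hi; have [/set0Pn [e eS] _] := h i hi.
  have ce : col e = i by move: eS; rewrite inS => /eqP.
  have := key e; rewrite ce => k; apply: (leq_trans k); apply: rank_mono.
  by rewrite subUset sub1set inP ce leqnn subP // leq_pred.
have gr : forall k i, i + k <= r -> rank M (P i) + k <= rank M (P (i + k)).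
  elim=> [|k IH] i hk; first by rewrite !addn0.
  have hk' : i + k <= r by lia.
  have := IH i hk'.
  have hs : 1 <= (i + k).+1 <= r by lia.
  have := step _ hs; rewrite /= -addnS; lia.
split => // i hi.
have := gr i 0; have := gr (r - i) i; rewrite rP0 add0n (_ : i + (r - i) = r); last lia.
rewrite Pr hr; lia.
Qed.


Lemma ii_K : rainbow_circuit_free M col /\
  (forall i, 1 <= i <= r -> rank M (P i) = i) -> K.
Proof.
move=> [hrb hrk]; split => // e.
have rP := rPall hrk.
have rb : forall j, j <= r -> exists B, [/\ indep M B, B \subset P j, #|B| = j
   & {in B &, injective col}].
  elim=> [|j IH] hj.
    exists set0; split; [exact: indep0 | exact: sub0set | exact: cards0 |].
    by move=> a b; rewrite in_set0.
  have [B [iB sB cB inj]] := IH (ltnW hj).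
  have [W [iW sW eW]] := rank_wit M (P j.+1).
  have lt : #|B| < #|W| by rewrite eW rP // cB.
  have [x /setDP[xW xB] ix] := indep_aug iB iW lt.
  have cx : col x = j.+1.
    have := subsetP sW x xW; rewrite inP => h1.
    case: (leqP (col x) j) => h2; last lia.
    have s1 : x |: B \subset P j by rewrite subUset sub1set inP h2 sB.
    have := rank_ge ix s1; rewrite cardsU1 xB rP ?cB; lia.
  exists (x |: B); split => //.
  - by rewrite subUset sub1set inP cx leqnn (subset_trans sB (subP (leqnSn j))).
  - by rewrite cardsU1 xB cB.
  - apply: inj_add => // y yB; have := subsetP sB y yB; rewrite inP cx; lia.
have hc := hcol e.
have [B [iB sB cB inj]] := rb (col e).-1 (leq_trans (leq_pred _) (proj2 (andP hc))).
rewrite ltnNge; apply/negP => hle.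
have nB : e \notin B by apply/negP => /(subsetP sB); rewrite inP; lia.
have ninj : {in e |: B &, injective col}.
  apply: inj_add => // y yB; have := subsetP sB y yB; rewrite inP; lia.
have dep : ~~ indep M (e |: B).
  apply/negP => ie; have := rank_ge ie (setUS _ sB).
  rewrite cardsU1 nB cB; have := rP (col e).-1 (leq_trans (leq_pred _) (proj2 (andP hc))); lia.
have [C [hC sC]] := circuit_in dep.
apply: (hrb C hC) => a b aC bC; apply: ninj; exact: (subsetP sC).
Qed.

Lemma cut_facts i : 1 <= i -> cut_of M (P i) (S i) ->
  rank M (P i) = (rank M (P i.-1)).+1 /\
  forall e, col e = i -> rank M (P i.-1) < rank M (e |: P i.-1).
Proof.
move=> hi /minsetP [/andP[sS /forallP hS] minS].
have d : rank M (P i.-1) < rank M (P i).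
  have [B0 [iB0 sB0 eB0]] := rank_wit M (P i.-1).
  have [B1 [iB1 s01 sB1 eB1]] := extend iB0 (subset_trans sB0 (subP (leq_pred i))).
  have bas : basis_of M (P i) B1 by rewrite /basis_of iB1 sB1 eB1 eqxx.
  have /set0Pn [x] := implyP (hS B1) bas.
  rewrite in_setI inS => /andP[/eqP cx xB1].
  have xB0 : x \notin B0 by apply/negP => /(subsetP sB0); rewrite inP cx; lia.
  have s2 : x |: B0 \subset B1 by rewrite subUset sub1set xB1 s01.
  have := subset_leq_card s2; rewrite cardsU1 xB0 eB0 eB1; lia.
have b : forall e, col e = i -> rank M (P i) <= rank M (e |: P i.-1).
  move=> e ce.
  have eS : e \in S i by rewrite inS ce.
  have nD : ~~ ((S i :\ e \subset P i) &&
     [forall B, basis_of M (P i) B ==> ((S i :\ e) :&: B != set0)]).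
    apply/negP => hD; have := minS _ hD (subsetDl _ _) => h.
    by move: eS; rewrite -h !inE eqxx.
  have sD : S i :\ e \subset P i := subset_trans (subsetDl _ _) sS.
  move: nD; rewrite sD /= => /forallPn [B]; rewrite negb_imply negbK.
  move=> /andP[/and3P[iB sB /eqP eB] /eqP hE].
  rewrite -eB; apply: rank_ge => //.
  apply/subsetP => x xB; rewrite in_setU1.
  case: eqP => //= ne.
  have : x \in (S i :\ e) :&: B = (x \in set0) by rewrite hE.
  rewrite in_setI in_set0 in_setD1 inS xB andbT.
  have := subsetP sB x xB; rewrite !inP => h1; case: eqP => // _ h2.
  have : col x != i by move: h2; case: (col x == i) => //; rewrite andbT; apply/negP; apply/eqP.
  lia.
have [x] : exists x, x \in S i.
  have [B [iB sB eB]] := rank_wit M (P i).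
  have bas : basis_of M (P i) B by rewrite /basis_of iB sB eB eqxx.
  have /set0Pn [x] := implyP (hS B) bas.
  by rewrite in_setI => /andP[xS _]; exists x.
rewrite inS => /eqP cx.
split.
- have := b x cx; have := rank_add1 M (P i.-1) x; lia.
- move=> e ce; have := b e ce; lia.
Qed.

Lemma i_K : (forall i, 1 <= i <= r -> cut_of M (P i) (S i)) -> K.
Proof.
move=> h.
have rP : forall i, i <= r -> rank M (P i) = i.
  elim=> [|i IH] hi; first exact: rP0.
  have hi' : 1 <= i.+1 <= r by lia.
  have [e _] := cut_facts (ltn0Sn _) (h _ hi').
  by rewrite e /= IH // ltnW.
split; first by move=> i /andP[_ hi]; exact: rP.
move=> e; have hc := hcol e.
have [_ ] := cut_facts (proj1 (andP hc)) (h _ hc).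
by apply.
Qed.

End Main.

Theorem lemma13 (T : finType) (M : matroid T) (r : nat) (col : T -> nat) :
  loopless M ->
  rank M [set: T] = r ->
  (forall x, 1 <= col x <= r) ->
  let S := cclass col in
  let P := cprefix col in
  let cond_i := forall i, 1 <= i <= r -> cut_of M (P i) (S i) in
  let cond_ii := rainbow_circuit_free M col /\
                 (forall i, 1 <= i <= r -> rank M (P i) = i) in
  let cond_iii := forall i, 1 <= i <= r -> S i != set0 /\ is_flat M (P i) in
  (cond_i <-> cond_ii) /\ (cond_ii <-> cond_iii).
Proof.
move=> hll hr hcol; cbv zeta.
have K_ii : K M r col -> rainbow_circuit_free M col /\
                 (forall i, 1 <= i <= r -> rank M (cprefix col i) = i).
  move=> hK; split; [exact: (K_rainbow hr hK) | exact: hK.1].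
split; split.
- move=> h; apply: K_ii; exact: (i_K hr hcol h).
- move=> h; apply: (K_i hr hcol); exact: (ii_K hr hcol h).
- move=> h; apply: (K_iii hr hcol); exact: (ii_K hr hcol h).
- move=> h; apply: K_ii; exact: (iii_K hll hr hcol h).
Qed.
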